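(* For a topological space $X$ the following statements are equivalent: (a) $C(X)$ has the countable sup property; (b) $C_b(X)$ has the countable sup property; (c) $X$ satisfies CCC for cozero sets.
   Context: $C(X)$ is the vector lattice of all real-valued continuous functions on $X$ with the pointwise order, and $C_b(X)$ its sublattice of bounded functions. A vector lattice has the countable sup property if every nonempty subset possessing a supremum contains a countable subset with the same supremum. A subset $U\subseteq X$ is a cozero set if $U=\{x: f(x)\neq 0\}$ for some $f\in C(X)$; $X$ satisfies CCC for cozero sets if every collection of pairwise disjoint cozero sets is countable. *)

(* Defs.v *)
From HB Require Import structures.
From mathcomp Require Import all_boot all_order all_algebra.
From mathcomp Require Import all_classical all_reals all_analysis.
Set Implicit Arguments. Unset Strict Implicit. Unset Printing Implicit Defensive.
Import Order.TTheory GRing.Theory Num.Theory numFieldNormedType.Exports.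
Local Open Scope classical_set_scope.
Local Open Scope ring_scope.

Definition Cfun (X : topologicalType) (R : realType) : set (X -> R) :=
  [set f : X -> R | continuous f].

Definition Cbfun (X : topologicalType) (R : realType) : set (X -> R) :=
  [set f : X -> R | continuous f /\ exists M : R, forall x, `|f x| <= M].

Definition is_sup_in (X : Type) (R : realType) (V S : set (X -> R)) (f : X -> R) :=
  V f /\ (forall g, S g -> forall x, g x <= f x) /\
  (forall h, V h -> (forall g, S g -> forall x, g x <= h x) -> forall x, f x <= h x).

Definition countable_sup_property (X : Type) (R : realType) (V : set (X -> R)) :=
  forall S : set (X -> R), S `<=` V -> S !=set0 ->
  forall f, is_sup_in V S f ->
  exists S' : set (X -> R), [/\ S' `<=` S, countable S' & is_sup_in V S' f].

Definition cozero_set (X : topologicalType) (R : realType) (U : set X) :=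
  exists f : X -> R, continuous f /\ U = [set x | f x != 0].

Definition CCC_cozero (X : topologicalType) (R : realType) :=
  forall F : set (set X),
    (forall U, F U -> cozero_set R U) ->
    (forall U V, F U -> F V -> U <> V -> U `&` V = set0) ->
    countable F.

Arguments Cfun : clear implicits.
Arguments Cbfun : clear implicits.
Arguments CCC_cozero : clear implicits.

(* Main.v *)
Require Import Defs.
From HB Require Import structures.
From mathcomp Require Import all_boot all_order all_algebra.
From mathcomp Require Import all_classical all_reals all_analysis.
From mathcomp Require Import ring lra.
Set Implicit Arguments. Unset Strict Implicit. Unset Printing Implicit Defensive.
Import Order.TTheory GRing.Theory Num.Theory numFieldNormedType.Exports.
Local Open Scope classical_set_scope.
Local Open Scope ring_scope.

Section Cont.
Context {R : realType} {X : topologicalType}.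
Implicit Types f g : X -> R.

Lemma ct_cst (c : R) : continuous (fun _ : X => c).
Proof. by move=> x; apply: cvg_cst. Qed.
Lemma ct_add f g : continuous f -> continuous g -> continuous (fun x => f x + g x).
Proof. by move=> cf cg x; exact: (continuousD (cf x) (cg x)). Qed.
Lemma ct_opp f : continuous f -> continuous (fun x => - f x).
Proof. by move=> cf x; exact: (continuousN (cf x)). Qed.
Lemma ct_sub f g : continuous f -> continuous g -> continuous (fun x => f x - g x).
Proof. by move=> cf cg x; exact: (continuousB (cf x) (cg x)). Qed.
Lemma ct_mul f g : continuous f -> continuous g -> continuous (fun x => f x * g x).
Proof. by move=> cf cg x; exact: (continuousM (cf x) (cg x)). Qed.
Lemma ct_min f g : continuous f -> continuous g -> continuous (fun x => Num.min (f x) (g x)).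
Proof. by move=> cf cg x; exact: (continuous_min (cf x) (cg x)). Qed.
Lemma ct_max f g : continuous f -> continuous g -> continuous (fun x => Num.max (f x) (g x)).
Proof. by move=> cf cg x; exact: (continuous_max (cf x) (cg x)). Qed.
Lemma ct_norm f : continuous f -> continuous (fun x => `|f x|).
Proof. by move=> cf x; apply: cvg_norm; apply: cf. Qed.
End Cont.

Lemma countableU T (A B : set T) : countable A -> countable B -> countable (A `|` B).
Proof.
move=> cA cB.
have -> : A `|` B = \bigcup_(i in [set: bool]) (if i then A else B).
  apply/seteqP; split => x.
    by case=> ?; [exists true|exists false].
  by case=> -[] _ /= ?; [left|right].
by apply: bigcup_countable => [|[]//]; apply: countableP.
Qed.

Section Aux.
Context {R : realType} {X : topologicalType}.
Implicit Types f g : X -> R.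

Lemma bump (phi : X -> R) x1 : continuous phi -> (forall x, 0 <= phi x) -> 0 < phi x1 ->
  let k := fun x => Num.min (phi x / phi x1) 1 in
  [/\ continuous k, (forall x, 0 <= k x <= 1), k x1 = 1 &
      forall x, phi x = 0 -> k x = 0].
Proof.
move=> cphi phi0 phi1 k; split.
- by apply: ct_min; [apply: ct_mul => //; apply: ct_cst|apply: ct_cst].
- move=> x; rewrite /k le_min ge_min lexx orbT ler01 andbT.
  rewrite andbT; apply: divr_ge0 => //; apply: ltW.
- by rewrite /k /= divff ?gt_eqF // minxx.
- by move=> x px; rewrite /k /= px mul0r; apply/min_idPl; apply: ler01.
Qed.

Lemma coz_lt f g : continuous f -> continuous g -> cozero_set R [set x | f x < g x].
Proof.
move=> cf cg; exists (fun x => Num.max (g x - f x) 0); split.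
  by apply: ct_max; [apply: ct_sub|apply: ct_cst].
apply/seteqP; split => x /=.
  by move=> fg; rewrite gt_eqF // lt_max subr_gt0 fg.
rewrite neq_lt; case/orP.
  by rewrite ltNge le_max lexx orbT.
by rewrite lt_max ltxx orbF subr_gt0.
Qed.

Lemma coz_and (U W : set X) : cozero_set R U -> cozero_set R W -> cozero_set R (U `&` W).
Proof.
move=> [u [cu ->]] [w [cw ->]]; exists (fun x => u x * w x); split.
  exact: ct_mul.
by apply/seteqP; split => x /=; rewrite mulf_eq0 negb_or => /andP.
Qed.
End Aux.

Lemma csp_CCC (R : realType) (X : topologicalType) (V : set (X -> R)) :
  (forall h : X -> R, V h -> continuous h) ->
  (forall k : X -> R, continuous k -> (forall x, 0 <= k x <= 1) -> V k) ->
  countable_sup_property V -> CCC_cozero X R.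
Proof.
move=> P1 P2 csp F Fcoz Fdisj.
pose S := [set k : X -> R | continuous k /\ (forall x, 0 <= k x <= 1) /\
  forall U, F U -> (forall x, U x -> k x = 0) \/ (forall x, ~ U x -> k x = 0)].
have S0 : S (fun=> 0).
  split; first exact: ct_cst.
  by split => [x|U _]; [rewrite lexx ler01|left].
have SV : S `<=` V by move=> k [ck [k01 _]]; apply: P2.
have sup1 : is_sup_in V S (fun=> 1).
  split; first by apply: P2 => [|x]; [apply: ct_cst|rewrite ler01 lexx].
  split; first by move=> g [_ [g01 _]] x; case/andP: (g01 x).
  move=> h Vh ubh x0; rewrite leNgt; apply/negP => hx0.
  pose d := (1 - h x0) / 2.
  have d0 : 0 < d by rewrite divr_gt0 // subr_gt0.
  pose w := fun x => Num.max (1 - d - h x) 0.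
  have cw : continuous w.
    apply: ct_max; last exact: ct_cst.
    by apply: ct_sub; [apply: ct_cst|apply: P1].
  have w0 x : 0 <= w x by rewrite le_max lexx orbT.
  have wx0 : 0 < w x0.
    rewrite lt_max ltxx orbF /d; lra.
  have wlt x : 0 < w x -> h x < 1.
    rewrite lt_max ltxx orbF subr_gt0 => /lt_trans; apply.
    by rewrite ltrBlDr ltrDl.
  case: (pselect (exists U, F U /\ exists x1, U x1 /\ 0 < w x1)).
  - move=> [U [FU [x1 [Ux1 wx1]]]].
    have [u [cu Ue]] := Fcoz U FU.
    have ux1 : u x1 != 0 by move: Ux1; rewrite Ue.
    have [] := @bump R X (fun x => w x * `|u x|) x1.
    + by apply: ct_mul => //; apply: ct_norm.
    + by move=> x; rewrite mulr_ge0.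
    + by rewrite mulr_gt0 // normr_gt0.
    move=> ck k01 k1 k0.
    have Sk : S (fun x => Num.min (w x * `|u x| / (w x1 * `|u x1|)) 1).
      split => //; split => // U' FU'.
      have [->|nUU'] := pselect (U' = U).
        right => x nUx; apply: k0.
        have -> : u x = 0 by apply/eqP; apply: contra_notT nUx; rewrite Ue.
        by rewrite normr0 mulr0.
      left => x U'x; apply: k0.
      have : ~ U x.
        move=> Ux; have := Fdisj _ _ FU FU' (nesym nUU').
        by move/seteqP => [/(_ x (conj Ux U'x))].
      rewrite Ue /= => /negP; rewrite negbK => /eqP ->.
      by rewrite normr0 mulr0.
    have := ubh _ Sk x1; rewrite k1 => /le_lt_trans /(_ (wlt _ wx1)).
    by rewrite ltxx.
  - move=> nex.
    have [] := @bump R X w x0 cw w0 wx0.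
    move=> ck k01 k1 k0.
    have Sk : S (fun x => Num.min (w x / w x0) 1).
      split => //; split => // U FU; left => x Ux; apply: k0.
      apply/eqP; rewrite eq_le w0 andbT leNgt; apply/negP => wx.
      by apply: nex; exists U; split => //; exists x.
    have := ubh _ Sk x0; rewrite k1 => /le_lt_trans /(_ hx0).
    by rewrite ltxx.
have [S' [S'S cS' supS']] := csp S SV (ex_intro _ _ S0) _ sup1.
pose T (k : X -> R) := [set U : set X | F U /\ exists x, U x /\ k x != 0].
have Tuniq k U U' : S k -> T k U -> T k U' -> U = U'.
  move=> [_ [_ kS]] [FU [x [Ux kx]]] [FU' [x' [U'x' kx']]].
  apply: contrapT => nUU'.
  have := Fdisj _ _ FU FU' nUU'; move/seteqP => [/(_ x') H _].
  case: (kS U FU) => [/(_ x Ux)|kU]; first by move/eqP: kx.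
  apply: H; split => //; apply: contrapT => nUx'.
  by move/eqP: kx'; apply; apply: kU.
have cT k : S k -> countable (T k).
  move=> Sk; have [[U0 TU0]|nT] := pselect (T k !=set0).
    apply: sub_countable (countable1 U0); apply: subset_card_le => U TU.
    exact: Tuniq TU TU0.
  have -> : T k = set0 by apply/seteqP; split => // U TU; apply: nT; exists U.
  exact: countable0.
have FG : F `<=` (\bigcup_(k in S') T k) `|` [set set0].
  move=> U FU; have [[k S'k TkU]|nG] := pselect (exists2 k, S' k & T k U).
    by left; exists k.
  right; have [u [cu Ue]] := Fcoz U FU.
  pose g := fun x => Num.min `|u x| 1.
  have H : forall x, 1 <= 1 - g x.
    apply: supS'.2.2.
      apply: P2.
        by apply: ct_sub; [apply: ct_cst|apply: ct_min; [apply: ct_norm|apply: ct_cst]].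
      move=> x; have a : 0 <= g x by rewrite /g le_min normr_ge0 ler01.
      have b : g x <= 1 by rewrite /g ge_min lexx orbT.
      apply/andP; split; lra.
    move=> k S'k x; have [_ [k01 _]] := S'S k S'k.
    case: (pselect (U x)) => Ux.
      have -> : k x = 0.
        apply/eqP; apply: contrapT => /negP kx; apply: nG; exists k => //.
        by split => //; exists x.
      rewrite subr_ge0 /g ge_min lexx orbT //.
    have ux0 : u x = 0 by apply/eqP; apply: contra_notT Ux; rewrite Ue.
    by rewrite /g ux0 normr0 (min_idPl ler01) subr0; case/andP: (k01 x).
  apply/seteqP; split => x //= Ux.
  have := H x; rewrite lerDl oppr_ge0 /g ge_min leNgt normr_gt0.
  have -> : u x != 0 by move: Ux; rewrite Ue.
  by rewrite /= ler10.
apply: sub_countable (subset_card_le FG) _; apply: countableU; last exact: countable1.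
apply: bigcup_countable => // k S'k; apply: cT; exact: S'S.
Qed.

Lemma CCC_csp (R : realType) (X : topologicalType) (V : set (X -> R)) :
  (forall h : X -> R, V h -> continuous h) ->
  (forall f k : X -> R, V f -> continuous k -> (forall x, 0 <= k x <= 1) ->
     V (fun x => f x - k x)) ->
  CCC_cozero X R -> countable_sup_property V.
Proof.
move=> P1 P3 ccc S SV [g0 Sg0] f [Vf [ubf lsf]].
pose eps := fun n : nat => (n.+1%:R)^-1 : R.
have eps0 n : 0 < eps n by rewrite invr_gt0.
have eps1 n : eps n <= 1 by rewrite invf_le1 ?ltr0n // ler1n.
pose D := fun n => [set U : set X | cozero_set R U /\ U !=set0 /\
  exists g, S g /\ U `<=` [set x | f x - eps n < g x]].
have /all_sig[A HA] : forall n, {A | maximal_disjoint_subcollection id A (D n)}.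
  by move=> n; apply: ex_maximal_disjoint_subcollection.
have cA n : countable (A n).
  have [AD tA _] := HA n.
  apply: ccc => [U /AD [] //|U U' AU AU' nUU'].
  apply/seteqP; split => // x Ux; apply: nUU'; apply: tA => //; exists x; exact: Ux.
have /choice[G HG] : forall p : nat * set X, exists g, S g /\
    (A p.1 p.2 -> p.2 `<=` [set x | f x - eps p.1 < g x]).
  move=> [n U] /=; have [AU|nAU] := pselect (A n U).
    have [AD _ _] := HA n; have [_ [_ [g [Sg Ug]]]] := AD U AU.
    by exists g.
  by exists g0.
pose S' := [set g0] `|` \bigcup_(n in [set: nat]) ((fun U => G (n, U)) @` A n).
have S'S : S' `<=` S.
  by move=> g [->//|[n _ [U _ <-]]]; case: (HG (n, U)).
exists S'; split => //.
  apply: countableU; first exact: countable1.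
  apply: bigcup_countable; first exact: countableP.
  by move=> n _; apply: sub_countable (card_image_le _ _) (cA n).
split => //; split; first by move=> g /S'S; apply: ubf.
move=> h Vh ubh x0; rewrite leNgt; apply/negP => hx0.
have [n hn] : exists n, 0 + eps n < f x0 - h x0 by apply: ltr_add_invr; rewrite subr_gt0.
rewrite add0r in hn.
pose e := eps n.
pose w := fun x => f x - h x - e.
have cw : continuous w by apply: ct_sub; [apply: ct_sub; apply: P1|apply: ct_cst].
have step1 : exists g, S g /\ exists x1, 0 < w x1 /\ f x1 - e < g x1.
  apply: contrapT => nex.
  pose k := fun x => Num.min (Num.max (w x) 0) e.
  have ck : continuous k.
    by apply: ct_min; [apply: ct_max => //; apply: ct_cst|apply: ct_cst].
  have k0 x : 0 <= k x by rewrite /k /= le_min le_max lexx orbT /= ltW ?eps0.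
  have ke x : k x <= e by rewrite /k /= ge_min lexx orbT.
  have : forall x, f x <= f x - k x.
    apply: (lsf (fun x => f x - k x)).
      apply: P3 => // x; rewrite k0 /=; exact: le_trans (ke x) (eps1 n).
    move=> g Sg x.
    have [wx|wx] := ltP 0 (w x).
      have : g x <= f x - e.
        rewrite leNgt; apply/negP => gx; apply: nex; exists g; split => //.
        by exists x.
      move=> /le_trans; apply; by rewrite lerB.
    have -> : k x = 0 by rewrite /k (max_r wx) (min_idPl (ltW (eps0 n))).
    by rewrite subr0; apply: ubf.
  move/(_ x0) => Hk.
  have : 0 < k x0.
    by rewrite /k lt_min lt_max ltxx orbF eps0 andbT /w subr_gt0.
  move: Hk; lra.
have [g [Sg [x1 [wx1 gx1]]]] := step1.
pose Z := [set x | 0 < w x] `&` [set x | f x - e < g x].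
have DZ : D n Z.
  split.
    apply: coz_and; first by apply: coz_lt => //; apply: ct_cst.
    by apply: coz_lt; [apply: ct_sub; [apply: P1|apply: ct_cst]|apply: P1; apply: SV].
  split; first by exists x1.
  by exists g; split => // x [].
have disj U : A n U -> U `&` Z = set0.
  move=> AU; apply/seteqP; split => // x [Ux [wx fx]].
  have [_ /(_ AU) /(_ x Ux) /= Gx] := HG (n, U).
  have : G (n, U) x <= h x.
    apply: ubh; right; exists n => //; exists U => //.
  have wx' : 0 < f x - h x - e := wx.
  have Gx' : f x - e < G (n, U) x := Gx.
  move: Gx' wx'; lra.
have [AD tA maxA] := HA n.
have nAZ : ~ A n Z.
  move=> AZ; have := disj Z AZ; move/seteqP => [/(_ x1) H _]; apply: H.
  by split; split.
apply: (maxA (A n `|` [set Z])).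
- split; first by move=> U AU; left.
  by move=> /(_ Z (or_intror erefl)).
- by move=> U [/AD//|->].
- move=> U U' [AU|->] [AU'|->] //=.
  + exact: tA.
  + by rewrite (disj _ AU) => -[? []].
  + by rewrite setIC (disj _ AU') => -[? []].
Qed.

Section Inst.
Context (R : realType) (X : topologicalType).

Lemma C_P1 (h : X -> R) : Cfun X R h -> continuous h. Proof. by []. Qed.
Lemma Cb_P1 (h : X -> R) : Cbfun X R h -> continuous h. Proof. by case. Qed.
Lemma C_P2 (k : X -> R) : continuous k -> (forall x, 0 <= k x <= 1) -> Cfun X R k.
Proof. by []. Qed.
Lemma Cb_P2 (k : X -> R) : continuous k -> (forall x, 0 <= k x <= 1) -> Cbfun X R k.
Proof.
move=> ck k01; split => //; exists 1 => x.
by case/andP: (k01 x) => a b; rewrite ger0_norm.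
Qed.
Lemma C_P3 (f k : X -> R) : Cfun X R f -> continuous k -> (forall x, 0 <= k x <= 1) ->
  Cfun X R (fun x => f x - k x).
Proof. by move=> cf ck _; apply: ct_sub. Qed.
Lemma Cb_P3 (f k : X -> R) : Cbfun X R f -> continuous k -> (forall x, 0 <= k x <= 1) ->
  Cbfun X R (fun x => f x - k x).
Proof.
move=> [cf [M fM]] ck k01; split; first exact: ct_sub.
exists (M + 1) => x; apply: le_trans (ler_normB _ _) _.
apply: lerD => //; case/andP: (k01 x) => a b; by rewrite ger0_norm.
Qed.
End Inst.

Theorem proposition4p7 (R : realType) (X : topologicalType) :
  (countable_sup_property (Cfun X R) <-> countable_sup_property (Cbfun X R)) /\
  (countable_sup_property (Cbfun X R) <-> CCC_cozero X R).
Proof.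
split; split => H.
- exact: CCC_csp (@Cb_P1 R X) (@Cb_P3 R X) (csp_CCC (@C_P1 R X) (@C_P2 R X) H).
- exact: CCC_csp (@C_P1 R X) (@C_P3 R X) (csp_CCC (@Cb_P1 R X) (@Cb_P2 R X) H).
- exact: csp_CCC (@Cb_P1 R X) (@Cb_P2 R X) H.
- exact: CCC_csp (@Cb_P1 R X) (@Cb_P3 R X) H.
Qed.
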